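(* Let $(C,\mathfrak p,\mathfrak d)$ be a regular $q$-cycle coalgebra with $\mathfrak p_{11}^1\ne0$. Then $\mathfrak d_{i+e,0}^i=\mathfrak p_{i+e,0}^i=0$ for all $i\ge0$ and $e>0$ with $i+e\le n-1$.
   Context: $K$ is an algebraically closed field of characteristic $0$ and $n\ge2$. $C$ is the coalgebra dual to $K[y]/\langle y^n\rangle$: basis $x_0,\dots,x_{n-1}$, $\Delta(x_i)=\sum_{j+k=i}x_j\otimes x_k$, $\epsilon(x_i)=\delta_{i0}$; $C\otimes C$ has the tensor product coalgebra structure; Sweedler notation $\Delta(b)=b_{(1)}\otimes b_{(2)}$. For linear maps $\mathfrak p,\mathfrak d\colon C\otimes C\to C$ write $a\cdot b=\mathfrak p(a\otimes b)$, $a:b=\mathfrak d(a\otimes b)$, $\mathfrak p(x_i\otimes x_j)=\sum_{k=0}^{n-1}\mathfrak p_{ij}^kx_k$, $\mathfrak d(x_i\otimes x_j)=\sum_{k=0}^{n-1}\mathfrak d_{ij}^kx_k$. A triple $(C,\mathfrak p,\mathfrak d)$ with $\mathfrak p,\mathfrak d$ coalgebra morphisms is a regular $q$-magma coalgebra if there are coalgebra morphisms $a\otimes b\mapsto a^b$, $a\otimes b\mapsto a_b$ from $C\otimes C$ to $C$ with $a^{b_{(1)}}\cdot b_{(2)}=(a\cdot b_{(1)})^{b_{(2)}}=\epsilon(b)a$ and $(a:b_{(2)})_{b_{(1)}}=a_{b_{(2)}}:b_{(1)}=\epsilon(b)a$. It is a regular $q$-cycle coalgebra if moreover for all $a,b,c$: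 (1) $(a\cdot b_{(1)})\cdot(c:b_{(2)})=(a\cdot c_{(2)})\cdot(b\cdot c_{(1)})$; (2) $(a\cdot b_{(1)}):(c\cdot b_{(2)})=(a:c_{(2)})\cdot(b:c_{(1)})$; (3) $(a:b_{(1)}):(c:b_{(2)})=(a:c_{(2)}):(b\cdot c_{(1)})$. *)

(* Defs.v *)
From HB Require Import structures.
From mathcomp Require Import all_boot all_order all_algebra.
Set Implicit Arguments. Unset Strict Implicit. Unset Printing Implicit Defensive.
Import GRing.Theory.
Local Open Scope ring_scope.

(* The coalgebra C dual to K[y]/<y^n>: elements are row vectors 'rV[K]_n,
   coordinates w.r.t. the basis x_0,...,x_{n-1}.
   C (x) C is represented by 'M[K]_n: entry (u,v) = coefficient of x_u (x) x_v. *)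

Section QCycle.
Variables (K : fieldType) (n : nat).

Definition xb (i : 'I_n) : 'rV[K]_n := delta_mx 0 i.

Definition eps (b : 'rV[K]_n) : K := \sum_(i < n | val i == 0%N) b 0 i.

Definition DeltaC (c : 'rV[K]_n) : 'M[K]_n :=
  \sum_(k < n) c 0 k *: \sum_(u < n) \sum_(v < n | (u + v == k)%N) delta_mx u v.

Definition tens (u v : 'rV[K]_n) : 'M[K]_n := u^T *m v.

(* the linear map C (x) C -> C with structure constants f i j k, i.e.
   f(x_i (x) x_j) = sum_k f i j k x_k, applied to u (x) v *)
Definition bil (f : 'I_n -> 'I_n -> 'I_n -> K) (u v : 'rV[K]_n) : 'rV[K]_n :=
  \sum_(i < n) \sum_(j < n) (u 0 i * v 0 j) *: \row_(k < n) f i j k.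

(* Sweedler sum: for F bilinear, sw b F = F(b_(1), b_(2)) *)
Definition sw (b : 'rV[K]_n) (F : 'rV[K]_n -> 'rV[K]_n -> 'rV[K]_n) : 'rV[K]_n :=
  \sum_(j < n) b 0 j *:
     \sum_(s < n) \sum_(t < n | (s + t == j)%N) F (xb s) (xb t).

(* f : C (x) C -> C is a coalgebra morphism (C (x) C with the tensor product
   coalgebra structure), checked on the basis x_i (x) x_j *)
Definition coalg_mor (f : 'I_n -> 'I_n -> 'I_n -> K) : Prop :=
  forall i j : 'I_n,
    DeltaC (bil f (xb i) (xb j)) =
      \sum_(a < n) \sum_(b < n | (a + b == i)%N)
       \sum_(c < n) \sum_(d < n | (c + d == j)%N)
          tens (bil f (xb a) (xb c)) (bil f (xb b) (xb d))
    /\ eps (bil f (xb i) (xb j)) = eps (xb i) * eps (xb j).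

Definition regular_qmagma (p d : 'I_n -> 'I_n -> 'I_n -> K) : Prop :=
  coalg_mor p /\ coalg_mor d /\
  exists up lo : 'I_n -> 'I_n -> 'I_n -> K,
    coalg_mor up /\ coalg_mor lo /\
    forall a b : 'rV[K]_n,
      sw b (fun b1 b2 => bil p (bil up a b1) b2) = eps b *: a /\
      sw b (fun b1 b2 => bil up (bil p a b1) b2) = eps b *: a /\
      sw b (fun b1 b2 => bil lo (bil d a b2) b1) = eps b *: a /\
      sw b (fun b1 b2 => bil d (bil lo a b2) b1) = eps b *: a.

Definition regular_qcycle (p d : 'I_n -> 'I_n -> 'I_n -> K) : Prop :=
  regular_qmagma p d /\
  forall a b c : 'rV[K]_n,
    sw b (fun b1 b2 => bil p (bil p a b1) (bil d c b2)) =
      sw c (fun c1 c2 => bil p (bil p a c2) (bil p b c1)) /\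
    sw b (fun b1 b2 => bil d (bil p a b1) (bil p c b2)) =
      sw c (fun c1 c2 => bil p (bil d a c2) (bil d b c1)) /\
    sw b (fun b1 b2 => bil d (bil d a b1) (bil d c b2)) =
      sw c (fun c1 c2 => bil d (bil d a c2) (bil p b c1)).

End QCycle.

(* Main.v *)
Require Import Defs.
From mathcomp Require Import all_boot all_order all_algebra.
From mathcomp Require Import zify ring.
Set Implicit Arguments. Unset Strict Implicit. Unset Printing Implicit Defensive.
Import GRing.Theory.
Local Open Scope ring_scope.

Section Basic.
Variables (K : fieldType) (m : nat).
Local Notation N := m.+1.

Lemma sum_only (G : nat -> K) (t : nat) : (t < N)%N ->
  (forall a, (a < N)%N -> a != t -> G a = 0) -> \sum_(a < N) G a = G t.
Proof.
move=> tN H; rewrite (bigD1 (Ordinal tN)) //= big1 ?addr0 // => a /eqP ne.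
apply: H => //; apply/eqP => e; apply: ne; exact: val_inj.
Qed.

Lemma sum_two (G : nat -> K) (t1 t2 : nat) : (t1 < N)%N -> (t2 < N)%N -> t1 != t2 ->
  (forall a, (a < N)%N -> a != t1 -> a != t2 -> G a = 0) ->
  \sum_(a < N) G a = G t1 + G t2.
Proof.
move=> t1N t2N ne H; rewrite (bigD1 (Ordinal t1N)) //= (bigD1 (Ordinal t2N)) /=; last first.
  by rewrite -val_eqE /= eq_sym.
rewrite big1 ?addr0 // => a /andP [/eqP n1 /eqP n2]; apply: H => //.
  by apply/eqP => e; apply: n1; exact: val_inj.
by apply/eqP => e; apply: n2; exact: val_inj.
Qed.

Lemma conv (V : nmodType) (H : nat -> nat -> V) (i : nat) : (i < N)%N ->
  \sum_(a < N) \sum_(b < N | (a + b == i)%N) H a b = \sum_(a < i.+1) H a (i - a)%N.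
Proof.
move=> iN.
have inner : forall a : 'I_N, \sum_(b < N | (a + b == i)%N) H a b =
   if (a <= i)%N then H a (i - a)%N else 0.
  move=> a; case: ifP => ai.
    have hl : (i - a < N)%N by lia.
    rewrite (big_pred1 (Ordinal hl)) //= => b /=.
    by rewrite -val_eqE /=; apply/eqP/eqP => /= h; lia.
  rewrite big_pred0 // => b; apply/eqP => h; lia.
rewrite (eq_bigr _ (fun a _ => inner a)).
rewrite -(big_mkord xpredT (fun a => if (a <= i)%N then H a (i - a)%N else 0)).
rewrite -[RHS](big_mkord xpredT (fun a => H a (i - a)%N)).
rewrite (big_cat_nat _ (n := i.+1)) //= [X in _ + X]big1_seq ?addr0.
  by apply: eq_big_nat => a /andP [_ ha]; rewrite ltnS in ha; rewrite ha.
by move=> a /andP [_]; rewrite mem_index_iota => /andP [ha _]; rewrite leqNgt ha.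
Qed.

End Basic.


Section Eval.
Variables (K : fieldType) (m : nat).
Local Notation N := m.+2.
Implicit Types (f : 'I_N -> 'I_N -> 'I_N -> K).
Local Notation xx := (xb K).

Definition ext f (i j k : nat) : K :=
  if [&& (i < N)%N, (j < N)%N & (k < N)%N] then f (inord i) (inord j) (inord k) else 0.

Lemma extE f (a b c : 'I_N) : ext f a b c = f a b c.
Proof. by rewrite /ext !ltn_ord /= !inord_val. Qed.

Lemma ext_out f i j k : (N <= k)%N -> ext f i j k = 0.
Proof. by move=> h; rewrite (leqNgt N k) in h; rewrite /ext (negbTE h) !andbF. Qed.

Lemma xbE (i a : 'I_N) : xx i 0 a = (a == i)%:R.
Proof. by rewrite /xb mxE eqxx. Qed.

Lemma bilE f u v k : bil f u v 0 k = \sum_i \sum_j u 0 i * v 0 j * f i j k.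
Proof.
rewrite /bil summxE; apply: eq_bigr => i _; rewrite summxE; apply: eq_bigr => j _.
by rewrite !mxE.
Qed.

Lemma sum_o1 (V : nmodType) (G : 'I_N -> V) t : (forall a, a != t -> G a = 0) ->
  \sum_a G a = G t.
Proof. by move=> H; rewrite (bigD1 t) //= big1 ?addr0 // => a /H. Qed.

Lemma bil_xbr f u j k : bil f u (xx j) 0 k = \sum_i u 0 i * f i j k.
Proof.
rewrite bilE; apply: eq_bigr => i _; rewrite (sum_o1 (t:=j)) => [|b /negbTE nb].
  by rewrite xbE eqxx mulr1.
by rewrite xbE nb mulr0 mul0r.
Qed.

Lemma bil_xb f i j : bil f (xx i) (xx j) = \row_k f i j k.
Proof.
apply/rowP => k; rewrite bil_xbr mxE (sum_o1 (t:=i)) => [|a /negbTE na].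
  by rewrite xbE eqxx mul1r.
by rewrite xbE na mul0r.
Qed.
Lemma bil0r f u : bil f u 0 = 0.
Proof.
apply/rowP => k; rewrite bilE mxE big1 // => i _; rewrite big1 // => j _.
by rewrite mxE mulr0 mul0r.
Qed.

Lemma bilZr f u c v : bil f u (c *: v) = c *: bil f u v.
Proof.
apply/rowP => k; rewrite mxE !bilE mulr_sumr; apply: eq_bigr => i _.
rewrite mulr_sumr; apply: eq_bigr => j _; rewrite mxE; ring.
Qed.

Lemma eps_E (b : 'rV[K]_N) : eps b = b 0 ord0.
Proof.
rewrite /eps (big_pred1 ord0) // => i /=; by rewrite -val_eqE.
Qed.

Lemma sw_gen (j : 'I_N) G :
  sw (xx j) G = \sum_(s < N) \sum_(t < N | (s + t == j)%N) G (xx s) (xx t).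
Proof.
rewrite /sw (sum_o1 (t:=j)) => [|a /negbTE na]; last by rewrite xbE na scale0r.
by rewrite xbE eqxx scale1r.
Qed.

Lemma sw_xb0 G : sw (xx (@ord0 m.+1)) G = G (xx (@ord0 m.+1)) (xx (@ord0 m.+1)).
Proof.
rewrite sw_gen (sum_o1 (t:=(@ord0 m.+1))) => [|a na]; last first.
  rewrite big_pred0 // => t; apply/negP => /eqP h; move: na; rewrite -val_eqE /=; move: h; rewrite /= => h; lia.
rewrite (big_pred1 (@ord0 m.+1)) // => t /=; rewrite -val_eqE /=; lia.
Qed.

Definition o1 : 'I_N := inord 1.
Lemma o1E : nat_of_ord o1 = 1%N. Proof. by rewrite /o1 inordK. Qed.

Lemma sw_xb1 G : sw (xx o1) G = G (xx (@ord0 m.+1)) (xx o1) + G (xx o1) (xx (@ord0 m.+1)).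
Proof.
rewrite sw_gen o1E.
transitivity (\sum_(s < N) \sum_(t < N | (s + t == 1)%N) G (xx (inord s)) (xx (inord t))).
  by apply: eq_bigr => s _; apply: eq_bigr => t _; rewrite !inord_val.
rewrite (conv (fun s t => G (xx (inord s)) (xx (inord t)))) //.
rewrite big_ord_recr big_ord_recr big_ord0 /= add0r.
have e0 : inord 0 = (@ord0 m.+1) by apply: val_inj; rewrite /= inordK.
by rewrite subn0 subnn e0 /o1.
Qed.

Lemma DeltaC_E (c : 'rV[K]_N) (k l : 'I_N) :
  DeltaC c k l = if (k + l < N)%N then c 0 (inord (k + l)%N) else 0.
Proof.
rewrite /DeltaC summxE.
have inner : forall t : 'I_N,
  (\sum_(u < N) \sum_(v < N | (u + v == t)%N) delta_mx u v : 'M[K]_N) k l = ((k + l)%N == t)%:R.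
  move=> t; rewrite summxE (sum_o1 (t:=k)) => [|u /negbTE nu]; last first.
    by rewrite summxE big1 // => v _; rewrite mxE (eq_sym k) nu.
  rewrite summxE big_mkcond /= (sum_o1 (t:=l)) => [|v /negbTE nv]; last first.
    by case: ifP => // _; rewrite mxE (eq_sym l) nv andbF.
  by case: ifP => _; rewrite ?mxE ?eqxx.
rewrite (eq_bigr (fun t => c 0 t * ((k + l)%N == t)%:R)); last by move=> t _; rewrite mxE inner.
case: ifP => hkl.
  rewrite (sum_o1 (t:=inord (k + l)%N)) => [|t nt]; last first.
    suff -> : (k + l == t)%N = false by rewrite mulr0.
    apply/negP => /eqP e; move: nt; rewrite -val_eqE /= inordK // e eqxx //.
  by rewrite inordK // eqxx mulr1.
rewrite big1 // => t _; suff -> : (k + l == t)%N = false by rewrite mulr0.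
apply/negP => /eqP e; move: hkl; by rewrite e ltn_ord.
Qed.

Lemma tensE (u v : 'rV[K]_N) k l : tens u v k l = u 0 k * v 0 l.
Proof. by rewrite /tens mxE big_ord1 mxE. Qed.

Lemma coalg_eq f : coalg_mor f ->
  forall i j k l, (i < N)%N -> (j < N)%N -> (k < N)%N -> (l < N)%N ->
  (if (k + l < N)%N then ext f i j (k + l)%N else 0) =
  \sum_(a < i.+1) \sum_(c < j.+1) ext f a c k * ext f (i - a)%N (j - c)%N l.
Proof.
move=> Hf i j k l iN jN kN lN.
have [H _] := Hf (inord i) (inord j).
have := congr1 (fun M : 'M[K]_N => M (inord k) (inord l)) H.
rewrite DeltaC_E bil_xb !inordK // mxE.
have -> : (if (k + l < N)%N then f (inord i) (inord j) (inord (k + l)%N) else 0) =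
          (if (k + l < N)%N then ext f i j (k + l)%N else 0).
  by case: ifP => // h; rewrite /ext iN jN h.
move=> ->; rewrite summxE.
transitivity (\sum_(a < N) \sum_(b < N | (a + b == i)%N)
   \sum_(c < N) \sum_(d < N | (c + d == j)%N) ext f a c k * ext f b d l).
  apply: eq_bigr => a _; rewrite summxE; apply: eq_bigr => b _; rewrite summxE; apply: eq_bigr => c _.
  rewrite summxE; apply: eq_bigr => d _; rewrite tensE !bil_xb !mxE.
  by rewrite -(extE f a c (inord k)) -(extE f b d (inord l)) !inordK.
rewrite (conv (fun a b => \sum_(c < N) \sum_(d < N | (c + d == j)%N) ext f a c k * ext f b d l)) //.
apply: eq_bigr => a _; exact: (conv (fun c d => ext f a c k * ext f (i - a)%N d l) jN).
Qed.

Lemma coalg_eps f : coalg_mor f -> forall i j, (i < N)%N -> (j < N)%N ->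
  ext f i j 0 = ((i == 0%N) && (j == 0%N))%:R.
Proof.
move=> Hf i j iN jN; have [_ H] := Hf (inord i) (inord j).
move: H; rewrite !eps_E bil_xb !mxE.
have e0 : (@ord0 m.+1) = inord 0 by apply: val_inj; rewrite /= inordK.
move=> H; rewrite /ext iN jN /= -e0 H !eqxx /= -!val_eqE /= !inordK //.
by case: (i) => [|?]; case: (j) => [|?]; rewrite /= ?mulr1 ?mul0r ?mulr0.
Qed.

End Eval.


Definition goodF (K : fieldType) (m : nat) (F : nat -> nat -> nat -> K) : Prop :=
  (forall i j k l, (i < m.+2)%N -> (j < m.+2)%N -> (k < m.+2)%N -> (l < m.+2)%N ->
  (if (k + l < m.+2)%N then F i j (k + l)%N else 0) =
  \sum_(a < i.+1) \sum_(c < j.+1) F a c k * F (i - a)%N (j - c)%N l) /\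
  (forall i j, (i < m.+2)%N -> (j < m.+2)%N ->
  F i j 0 = ((i == 0%N) && (j == 0%N))%:R) /\
  (forall i j k, (m.+2 <= k)%N -> F i j k = 0).

Section Gen.
Variables (K : fieldType) (m : nat) (F : nat -> nat -> nat -> K).
Local Notation N := m.+2.
Hypothesis HF : goodF m F.
Let Heq := proj1 HF.
Let Heps := proj1 (proj2 HF).
Let Hout := proj2 (proj2 HF).

Lemma L1 : F 0 0 1 = 0.
Proof.
set x := F 0 0 1.
have rec : forall k, (k.+1 < N)%N -> F 0 0 k.+1 = F 0 0 k * x.
  move=> k hk; have := @Heq 0 0 k 1 isT isT (ltnW hk) isT.
  by rewrite addn1 hk !big_ord1 /=.
have pw : forall k, (k < N)%N -> F 0 0 k = x ^+ k.
  elim=> [|k IH] hk; first by rewrite Heps.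
  by rewrite rec // IH ?exprSr // ltnW.
have := @Heq 0 0 m.+1 1 isT isT (ltnSn _) isT.
rewrite addn1 ltnn !big_ord1 /= pw // -exprSr => /esym /eqP.
by rewrite expf_eq0 /= => /eqP.
Qed.

Lemma L2 : forall k i j, (i + j < k)%N -> F i j k = 0.
Proof.
elim=> [|k IH] i j h; first by [].
case: (ltnP k.+1 N) => hk; last exact: Hout.
have := @Heq i j k 1 ltac:(lia) ltac:(lia) ltac:(lia) isT.
rewrite addn1 hk => ->.
apply: big1 => a _; apply: big1 => c _.
case: (ltnP (a + c) k) => hac; first by rewrite IH // mul0r.
have ha := ltn_ord a; have hc := ltn_ord c.
have -> : (i - a = 0)%N by lia.
have -> : (j - c = 0)%N by lia.
by rewrite L1 mulr0.
Qed.


Local Notation al := (F 1 0 1).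
Local Notation be := (F 0 1 1).

Lemma Lsum k i j : (k < N)%N -> (i + j = k.+1)%N ->
  (forall a c, (a + c = k)%N -> F a c k = 'C(k, a)%:R * al ^+ a * be ^+ c) ->
  \sum_(a < i.+1) \sum_(c < j.+1) F a c k * F (i - a)%N (j - c)%N 1 =
  'C(k.+1, i)%:R * al ^+ i * be ^+ j.
Proof.
move=> kN hij D.
rewrite big_ord_recr /= subnn.
have A : \sum_(a < i) \sum_(c < j.+1) F a c k * F (i - a)%N (j - c)%N 1 =
   if i is i'.+1 then F i' j k * al else 0.
  transitivity (\sum_(a < i) F a j k * F (i - a)%N 0 1).
    apply: eq_bigr => a _; rewrite big_ord_recr /= subnn big1 ?add0r // => c _.
    have ha := ltn_ord a; have hc := ltn_ord c.
    by rewrite (@L2 k) ?mul0r //=; lia.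
  case: i hij {D} => [|i'] hij; first by rewrite big_ord0.
  rewrite big_ord_recr /= big1 ?add0r; last first.
    move=> a _; have ha := ltn_ord a.
    by rewrite (@L2 k) ?mul0r //=; lia.
  by rewrite subSnn.
have B : \sum_(c < j.+1) F i c k * F 0 (j - c)%N 1 =
   if j is j'.+1 then F i j' k * be else 0.
  rewrite big_ord_recr /= subnn L1 mulr0 addr0.
  case: j hij {A D} => [|j'] hij; first by rewrite big_ord0.
  rewrite big_ord_recr /= big1 ?add0r; last first.
    move=> c _; have hc := ltn_ord c.
    by rewrite (@L2 k) ?mul0r //=; lia.
  by rewrite subSnn.
rewrite A B.
case: i hij A B => [|i'] hij _ _; case: j hij => [|j'] hij.
- by [].
- have e : j' = k by lia.
  subst j'; rewrite add0r D ?add0n // !bin0 !expr0 !mul1r exprSr.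
  by [].
- have e : i' = k by lia.
  subst i'; rewrite addr0 D ?addn0 // !binn !expr0 !mulr1 !mul1r exprSr.
  by [].
- rewrite D; last by lia.
  rewrite D; last by lia.
  have -> : k = (i' + j'.+1)%N by lia.
  rewrite -addSnnS binS natrD !exprS; ring.
Qed.

Lemma Ldiag : forall k, (k < N)%N -> forall i j, (i + j = k)%N ->
  F i j k = 'C(k, i)%:R * al ^+ i * be ^+ j.
Proof.
elim=> [|k IH] kN i j hij.
  have [-> ->] : i = 0%N /\ j = 0%N by lia.
  by rewrite Heps // !expr0 !mulr1.
have := @Heq i j k 1 ltac:(lia) ltac:(lia) ltac:(lia) isT.
rewrite addn1 kN => ->.
apply: Lsum => //; first by lia.
move=> a c hac; apply: IH => //; exact: ltnW.
Qed.

Lemma Lbound i j : (i + j = N)%N -> (i < N)%N -> (j < N)%N ->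
  'C(N, i)%:R * al ^+ i * be ^+ j = 0.
Proof.
move=> hij iN jN.
have := @Heq i j m.+1 1 iN jN (ltnSn _) isT.
rewrite addn1 ltnn => ->; symmetry; apply: Lsum => //.
move=> a c hac; exact: Ldiag.
Qed.

Lemma Lbeta : al != 0 -> (N%:R != 0 :> K) -> be = 0.
Proof.
move=> ha hN; have := @Lbound 1 m.+1 ltac:(lia) isT (ltnSn _).
rewrite bin1 expr1 => /eqP; rewrite !mulf_eq0 (negbTE ha) (negbTE hN) /=.
by rewrite expf_eq0 /= => /eqP.
Qed.

Lemma Lkk k : (k < N)%N -> F k 0 k = al ^+ k.
Proof. by move=> kN; rewrite Ldiag ?addn0 // binn expr0 mulr1 mul1r. Qed.

Lemma L3b : be = 0 -> forall a k, (a < k)%N -> F a 1 k = 0.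
Proof.
move=> hb a k hak.
case: (ltnP (a + 1) k) => h; first exact: L2.
case: (ltnP k N) => kN; last exact: Hout.
rewrite Ldiag //; last by lia.
by rewrite hb expr1 mulr0.
Qed.

Lemma L4 : be = 0 -> forall k, (k < N)%N ->
  F k 1 k = k%:R * al ^+ k.-1 * F 1 1 1.
Proof.
move=> hb; elim=> [|k IH] kN; first by rewrite Heps // mul0r mul0r.
have := @Heq k.+1 1 k 1 kN isT (ltnW kN) isT.
rewrite addn1 kN => ->.
rewrite big_ord_recr big_ord_recr /= big1 ?add0r; last first.
  move=> a _; have ha := ltn_ord a.
  rewrite !big_ord_recr big_ord0 /= add0r.
  by rewrite (@L2 k a 0) ?mul0r ?add0r ?(L3b hb) ?mul0r //; lia.
rewrite !big_ord_recr !big_ord0 /= !add0r subnn subSnn !subn0 !subnn.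
rewrite L1 hb !mulr0 !addr0 Lkk ?IH; try lia.
case: k IH kN => [|k] _ _; first by rewrite !mul0r addr0 mulr1.
have -> : (k.+2)%:R = (k.+1)%:R + 1 :> K by rewrite -[k.+2]addn1 natrD.
rewrite /= !exprS; ring.
Qed.

End Gen.


Section Mat.
Variables (K : fieldType) (m : nat).
Local Notation N := m.+2.

Lemma LA (U S : nat -> nat -> K) (w : K) :
  (forall i a, (a < i)%N -> U i a = 0) -> (forall i a, (a < i)%N -> S i a = 0) ->
  U 0%N 1%N = 0 -> S 0%N 1%N = 0 -> S 1%N 1%N != 0 -> U 1%N 1%N != 0 ->
  \sum_(a < N) S a 1%N * U 1%N a = w * \sum_(a < N) U a 1%N * S 1%N a -> w = 1.
Proof.
move=> tU tS U01 S01 S11 U11.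
rewrite (@sum_only _ m.+1 (fun a => S a 1%N * U 1%N a) 1) //; last first.
  move=> a aN na; case: a aN na => [|[|a]] _ na //; first by rewrite S01 mul0r.
  by rewrite tS ?mul0r.
rewrite (@sum_only _ m.+1 (fun a => U a 1%N * S 1%N a) 1) //; last first.
  move=> a aN na; case: a aN na => [|[|a]] _ na //; first by rewrite U01 mul0r.
  by rewrite tU ?mul0r.
move=> /eqP; rewrite -subr_eq0 [U _ _ * _]mulrC -[X in X - _]mul1r -mulrBl mulf_eq0.
rewrite mulf_eq0 (negbTE S11) (negbTE U11) orbF subr_eq0 orbF. by move=> /eqP <-.
Qed.

Lemma LB (U S : nat -> nat -> K) (g : K) :
  (forall i j, (i < N)%N -> (j < N)%N ->
     \sum_(a < N) S a j * U i a = \sum_(a < N) U a j * S i a) ->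
  (forall i a, (a < i)%N -> U i a = 0) -> (forall i a, (a < i)%N -> S i a = 0) ->
  (forall k, (k < N)%N -> U k k = 1) -> (forall k, (k < N)%N -> S k k = k%:R * g) ->
  g != 0 -> (forall k, k != 0%N -> k%:R != 0 :> K) ->
  forall i j, (i < j)%N -> (j < N)%N -> U i j = 0.
Proof.
move=> Hid tU tS dU dS g0 ch0.
suff : forall d i j, (j - i <= d)%N -> (i < j)%N -> (j < N)%N -> U i j = 0.
  by move=> H i j ij jN; apply: (H (j - i)%N).
elim=> [|d IH] i j hd ij jN; first by lia.
have := Hid i j ltac:(lia) jN.
rewrite (@sum_two _ m.+1 (fun a => S a j * U i a) i j) ?ltn_neqAle ?ij //; try lia; last first.
  move=> a aN ai aj; case: (ltnP a i) => h1; first by rewrite tU ?mulr0.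
  case: (ltnP a j) => h2; last by rewrite tS ?mul0r //; lia.
  by rewrite (IH i a) ?mulr0 //; lia.
rewrite (@sum_two _ m.+1 (fun a => U a j * S i a) i j) ?ltn_neqAle ?ij //; try lia; last first.
  move=> a aN ai aj; case: (ltnP a i) => h1; first by rewrite tS ?mulr0.
  case: (ltnP a j) => h2; last by rewrite tU ?mul0r //; lia.
  by rewrite (IH a j) ?mul0r //; lia.
rewrite !dU ?dS; try lia.
move=> e.
have : (j - i)%:R * g * U i j = 0.
  rewrite natrB ?(ltnW ij) //.
  transitivity ((S i j * 1 + j%:R * g * U i j) - (U i j * (i%:R * g) + 1 * S i j)); first ring.
  by rewrite e subrr.
move=> /eqP; rewrite !mulf_eq0 (negbTE g0) (negbTE (ch0 _ _)) /=; last by lia.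
by move=> /eqP.
Qed.

End Mat.


Section Main.
Variables (K : fieldType) (m : nat).
Local Notation N := m.+2.
Local Notation xx := (xb K).
Local Notation O0 := (@ord0 m.+1).
Local Notation O1 := (o1 m).
Implicit Types (f g p d : 'I_N -> 'I_N -> 'I_N -> K).

Lemma goodE f : coalg_mor f -> goodF m (ext f).
Proof.
move=> cf; split; first exact: coalg_eq.
split; first exact: coalg_eps.
by move=> i j k; apply: ext_out.
Qed.

Lemma row00 f : coalg_mor f -> \row_k f O0 O0 k = xx O0.
Proof.
move=> cf; have g := goodE cf; apply/rowP => k; rewrite !mxE -extE /=.
case: k => [[|k] kN] /=; first by rewrite (proj1 (proj2 g)).
by rewrite (L2 g).
Qed.

Lemma row01 f : coalg_mor f -> ext f 0 1 1 = 0 -> \row_k f O0 O1 k = 0.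
Proof.
move=> cf b0; have g := goodE cf; apply/rowP => k; rewrite !mxE -extE (o1E m) /=.
case: k => [[|[|k]] kN] /=; first by rewrite (proj1 (proj2 g)).
  by [].
by rewrite (L2 g).
Qed.

Lemma row10 f : coalg_mor f -> \row_k f O1 O0 k = ext f 1 0 1 *: xx O1.
Proof.
move=> cf; have g := goodE cf; apply/rowP => k; rewrite !mxE -extE (o1E m) /=.
rewrite -[k == _]val_eqE /= (o1E m).
case: k => [[|[|k]] kN] /=; first by rewrite (proj1 (proj2 g)) // mulr0.
  by rewrite mulr1.
by rewrite (L2 g) ?mulr0.
Qed.

Lemma sum_conv f g (J I b c : 'I_N) :
  \sum_a f J b a * g a c I = \sum_(a < N) ext f J b a * ext g a c I.
Proof. by apply: eq_bigr => a _; rewrite !extE. Qed.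

Lemma eps_x0 : eps (xx O0) = 1.
Proof. by rewrite eps_E xbE eqxx. Qed.

Lemma one_sum f g : coalg_mor f ->
  \sum_(a < N) ext f 1 0 a * ext g a 0 1 = ext f 1 0 1 * ext g 1 0 1.
Proof.
move=> cf; have gf := goodE cf.
rewrite (@sum_only _ m.+1 (fun a => ext f 1 0 a * ext g a 0 1) 1) //.
move=> a aN; case: a aN => [|[|a]] aN _ //; first by rewrite (proj1 (proj2 gf)) // mul0r.
by rewrite (L2 gf) ?mul0r.
Qed.


Lemma bil_row f g (J b c I : 'I_N) :
  bil f (\row_k g J b k) (xx c) 0 I = \sum_(a < N) ext g J b a * ext f a c I.
Proof. by rewrite bil_xbr; apply: eq_bigr => a _; rewrite mxE !extE. Qed.

Lemma mainM p d : [pchar K] =i pred0 -> regular_qcycle p d -> p O1 O1 O1 != 0 ->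
  forall i j : 'I_N, (i < j)%N -> d j O0 i = 0 /\ p j O0 i = 0.
Proof.
move=> ch [[cp [cd [up [lo [cup [clo Hreg]]]]]] Hcyc] hg i j ij.
have gp := goodE cp; have gd := goodE cd.
have ch0 : forall k, k != 0%N -> k%:R != 0 :> K.
  by move: ch => /pcharf0P h k; rewrite h.
have [H1 [_ [H3 _]]] := Hreg (xx O1) (xx O0).
have ap : ext p 1 0 1 != 0.
  move: H1; rewrite sw_xb0 /= eps_x0 scale1r bil_xb.
  move=> /(congr1 (fun v : 'rV[K]_N => v 0 O1)); rewrite bil_row xbE eqxx (o1E m) /=.
  rewrite (one_sum _ cup) => e; apply/eqP => h; move: e; rewrite h mulr0 => /eqP.
  by rewrite eq_sym oner_eq0.
have ad : ext d 1 0 1 != 0.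
  move: H3; rewrite sw_xb0 /= eps_x0 scale1r bil_xb.
  move=> /(congr1 (fun v : 'rV[K]_N => v 0 O1)); rewrite bil_row xbE eqxx (o1E m) /=.
  rewrite (one_sum _ cd) => e; apply/eqP => h; move: e; rewrite h mul0r => /eqP.
  by rewrite eq_sym oner_eq0.
have bp : ext p 0 1 1 = 0 := Lbeta gp ap (ch0 m.+2 isT).
have bd : ext d 0 1 1 = 0 := Lbeta gd ad (ch0 m.+2 isT).
have I1 : forall I J : 'I_N, \sum_(a < N) ext p J 1 a * ext p a 0 I =
     ext p 1 0 1 * \sum_(a < N) ext p J 0 a * ext p a 1 I.
  move=> I J; have [H _] := Hcyc (xx J) (xx O1) (xx O0).
  move: H; rewrite sw_xb1 sw_xb0 /= !bil_xb (row01 cd bd) (row00 cd) (row10 cp).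
  rewrite bil0r add0r bilZr => /(congr1 (fun v : 'rV[K]_N => v 0 I)).
  by rewrite mxE !bil_row (o1E m) /=.
have I2 : forall I J : 'I_N, \sum_(a < N) ext p J 1 a * ext d a 0 I =
     ext d 1 0 1 * \sum_(a < N) ext d J 0 a * ext p a 1 I.
  move=> I J; have [_ [H _]] := Hcyc (xx J) (xx O1) (xx O0).
  move: H; rewrite sw_xb1 sw_xb0 /= !bil_xb (row01 cp bp) (row00 cp) (row10 cd).
  rewrite bil0r add0r bilZr => /(congr1 (fun v : 'rV[K]_N => v 0 I)).
  by rewrite mxE !bil_row (o1E m) /=.
have triS : forall i a, (a < i)%N -> ext p a 1 i = 0 by move=> i' a h; exact: (L3b gp bp).
have triP : forall i a, (a < i)%N -> ext p a 0 i = 0.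
  by move=> i' a h; apply: (L2 gp); rewrite addn0.
have triD : forall i a, (a < i)%N -> ext d a 0 i = 0.
  by move=> i' a h; apply: (L2 gd); rewrite addn0.
have S11 : ext p 1 1 1 != 0 by rewrite -(o1E m) extE.
have a1 : ext p 1 0 1 = 1.
  apply: (@LA K m (fun i a => ext p a 0 i) (fun i a => ext p a 1 i)) => //.
  - by rewrite (proj1 (proj2 gp)).
  - by rewrite (proj1 (proj2 gp)).
  - have := I1 (inord 1) (inord 1); rewrite !inordK //.
have d1 : ext d 1 0 1 = 1.
  apply: (@LA K m (fun i a => ext d a 0 i) (fun i a => ext p a 1 i)) => //.
  - by rewrite (proj1 (proj2 gd)).
  - by rewrite (proj1 (proj2 gp)).
  - have := I2 (inord 1) (inord 1); rewrite !inordK //.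
have dS : forall k, (k < N)%N -> ext p k 1 k = k%:R * ext p 1 1 1.
  by move=> k kN; rewrite (L4 gp bp kN) a1 expr1n mulr1.
split.
  rewrite -extE; apply: (@LB K m (fun i a => ext d a 0 i) (fun i a => ext p a 1 i) (ext p 1 1 1)) => //.
  - move=> i' j' iN jN; have := I2 (inord i') (inord j'); rewrite !inordK // d1 mul1r //.
  - by move=> k kN; rewrite (Lkk gd kN) d1 expr1n.
rewrite -extE; apply: (@LB K m (fun i a => ext p a 0 i) (fun i a => ext p a 1 i) (ext p 1 1 1)) => //.
- move=> i' j' iN jN; have := I1 (inord i') (inord j'); rewrite !inordK // a1 mul1r //.
- by move=> k kN; rewrite (Lkk gp kN) a1 expr1n.
Qed.

End Main.


Unset Implicit Arguments.

Theorem proposition4p1 (K : closedFieldType) (n : nat)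
  (p d : 'I_n -> 'I_n -> 'I_n -> K) :
  [pchar K] =i pred0 ->
  (2 <= n)%N ->
  regular_qcycle p d ->
  (forall o : 'I_n, val o = 1%N -> p o o o != 0) ->
  forall (i j z : 'I_n), val z = 0%N -> (val i < val j)%N ->
    d j z i = 0 /\ p j z i = 0.
Proof.
case: n p d => [|[|m]] p d ch hn //.
move=> H hg i j z z0 ij.
have -> : z = ord0 by apply: val_inj.
apply: (mainM ch H _ ij).
by apply: hg; exact: (o1E m).
Qed.
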